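(* For any non-negative integer $L$ and positive integers $p'$, $p$ such that $p' > p$, \[ D_{p',s}\left(\left\lceil\frac{L+r-s}{2}\right\rceil,\left\lfloor\frac{L-r+s}{2}\right\rfloor;p-r,r\right) = \sum_{j\in\mathbb{Z}}\left\{q^{j^2pp'+(rp'-sp)j}\begin{bmatrix}L\\ \left\lfloor\frac{L-r+s}{2}\right\rfloor-jp'\end{bmatrix}_{q}-q^{(jp+r)(jp'+s)}\begin{bmatrix}L\\ \left\lfloor\frac{L-r-s}{2}\right\rfloor-jp'\end{bmatrix}_{q}\right\}\ge 0, \] where $r$ and $s$ are integers such that $0 < r < p$ and $0 < s < p'$.
   Context: The $q$-binomial coefficient is $\begin{bmatrix}m\\ n\end{bmatrix}_q=\frac{(q;q)_m}{(q;q)_n(q;q)_{m-n}}$ for $m\ge n\ge 0$ and $0$ otherwise, where $(a;q)_L=\prod_{k=0}^{L-1}(1-aq^k)$. For integers $K,i$ and parameters $N,M,\alpha,\beta$, \[ D_{K,i}(N,M;\alpha,\beta)=\sum_{j\in\mathbb{Z}}\left\{q^{j((\alpha+\beta)Kj+K\beta-(\alpha+\beta)i)}\begin{bmatrix}M+N\\ M-Kj\end{bmatrix}_{q}-q^{((\alpha+\beta)j+\beta)(Kj+i)}\begin{bmatrix}M+N\\ M-Kj-i\end{bmatrix}_{q}\right\}. \] (Andrews et al. showed this is the generating function of partitions with at most $M$ parts, largest part at most $N$, and hook-difference restrictions on the $(1-\beta)$th and $(\alpha-1)$th diagonals, for $\alpha,\beta$ non-negative integers, $0<i<K$, $\beta-i\le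 N-M\le K-\alpha-i$.) ''$P(q)\ge 0$'' means the power series $P(q)$ has non-negative coefficients. *)

(* Defs.v *)
(* The q-series live in the field of fractions of Z[q]. *)
From HB Require Import structures.
From mathcomp Require Import all_boot all_order all_algebra fraction.
Set Implicit Arguments. Unset Strict Implicit. Unset Printing Implicit Defensive.
Import Order.TTheory GRing.Theory Num.Theory.
Local Open Scope ring_scope.

Definition qfrac := {fraction {poly int}}.
Definition q : qfrac := tofrac ('X : {poly int}).

Definition qpoch (L : nat) : qfrac := \prod_(k < L) (1 - q * q ^+ k).

Definition qbinom (m n : int) : qfrac :=
  if (0 <= n) && (n <= m) then
    qpoch `|m|%N / (qpoch `|n|%N * qpoch `|m - n|%N)
  else 0.

(* sum over j in Z of F j, restricted to -B <= j <= B;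
   used only with B beyond the (finite) support of F *)
Definition sumZ (B : nat) (F : int -> qfrac) : qfrac :=
  \sum_(k < (2 * B).+1) F (k%:Z - B%:Z).

(* D_{K,i}(N,M;alpha,beta); for K >= 1 all terms with |j| > |M|+|N|+|i|
   vanish because the q-binomials are then 0, so the truncation is exact *)
Definition D (K i N M alpha beta : int) : qfrac :=
  sumZ (`|M| + `|N| + `|i|).+1 (fun j =>
    q ^ (j * ((alpha + beta) * K * j + K * beta - (alpha + beta) * i))
      * qbinom (M + N) (M - K * j)
    - q ^ (((alpha + beta) * j + beta) * (K * j + i))
      * qbinom (M + N) (M - K * j - i)).

Definition floor2 (x : int) : int := (x %/ 2)%Z.
Definition ceil2 (x : int) : int := - ((- x) %/ 2)%Z.

(* "P(q) >= 0": P is a power series (here: polynomial) in q with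
   non-negative coefficients *)
Definition nonneg_series (f : qfrac) : Prop :=
  exists P : {poly int}, f = tofrac P /\ forall k : nat, 0 <= P`_k.

(* Main.v *)
Require Import Defs.
From HB Require Import structures.
From mathcomp Require Import all_boot all_order all_algebra fraction.
From mathcomp Require Import zify ring lra.
Import Order.TTheory GRing.Theory Num.Theory.
Local Open Scope ring_scope.

Lemma q_neq0 : q != 0.
Proof. by rewrite /q tofrac_eq0 polyX_eq0. Qed.

Lemma qXn n : q ^+ n = tofrac ('X^n : {poly int}).
Proof. by rewrite /q tofracXn. Qed.

Lemma one_sub_qX_neq0 k : 1 - q ^+ k.+1 != 0.
Proof.
rewrite qXn -tofrac1 -tofracB tofrac_eq0; apply/eqP => /(congr1 (fun p : {poly int} => p`_0)).
rewrite coefB coef1 coefXn /= subr0.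
by rewrite coef0.
Qed.

Lemma qpochS n : qpoch n.+1 = qpoch n * (1 - q ^+ n.+1).
Proof. by rewrite /qpoch big_ord_recr /= exprS. Qed.

Lemma qpoch0 : qpoch 0 = 1.
Proof. by rewrite /qpoch big_ord0. Qed.

Lemma qpoch_neq0 n : qpoch n != 0.
Proof.
elim: n => [|n IH]; first by rewrite qpoch0 oner_eq0.
rewrite qpochS; apply: mulf_neq0; [exact: IH | exact: one_sub_qX_neq0].
Qed.

Lemma qbinomE (n k : nat) : qbinom n k =
  if (k <= n)%N then qpoch n / (qpoch k * qpoch (n - k)) else 0.
Proof.
rewrite /qbinom lez_nat /=.
case: leqP => // hk; by rewrite subzn.
Qed.

Lemma qbinom_out m k : (k < 0) || (m < k) -> qbinom m k = 0.
Proof.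
rewrite /qbinom; case/orP => h; case: ifP => //; case/andP => h1 h2; lia.
Qed.

Lemma qbinom_sym m k : qbinom m k = qbinom m (m - k).
Proof.
rewrite /qbinom.
have -> : (0 <= m - k) && (m - k <= m) = (0 <= k) && (k <= m) by apply/idP/idP => /andP[? ?]; apply/andP; split; lia.
case: ifP => // _. have -> : m - (m - k) = k by ring.
by rewrite [qpoch `|k|%N * _]mulrC.
Qed.

Lemma pascal_aux (F : fieldType) (x y A B C : F) :
  A != 0 -> B != 0 -> C != 0 -> 1 - x != 0 -> 1 - y != 0 ->
  C * (1 - x * y) / (A * (1 - x) * (B * (1 - y))) =
  C / (A * (B * (1 - y))) + x * (C / (A * (1 - x) * B)).
Proof. by move=> *; field; apply/and4P. Qed.

Lemma pascal_nat (n k : nat) :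
  qbinom n.+1 k.+1 = qbinom n k + q ^+ k.+1 * qbinom n k.+1.
Proof.
rewrite !qbinomE ltnS.
case: (ltngtP k n) => hk.
- have [b ->] : exists b, n = (k + b).+1 by exists (n - k.+1)%N; lia.
  rewrite (_ : ((k + b).+2 - k.+1 = b.+1)%N); last lia.
  rewrite (_ : ((k + b).+1 - k = b.+1)%N); last lia.
  rewrite (_ : ((k + b).+1 - k.+1 = b)%N); last lia.
  rewrite (qpochS (k + b).+1) (qpochS k) (qpochS b).
  rewrite (_ : q ^+ (k + b).+2 = q ^+ k.+1 * q ^+ b.+1); last by rewrite -exprD; congr (_ ^+ _); lia.
  have h1 := qpoch_neq0 k; have h2 := qpoch_neq0 b; have h3 := qpoch_neq0 (k + b).+1.
  have h4 := one_sub_qX_neq0 k; have h5 := one_sub_qX_neq0 b.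
  exact: (@pascal_aux _ _ _ _ _ _ h1 h2 h3 h4 h5).
- by rewrite mulr0 addr0.
- subst k. rewrite subSS subnn qpoch0 mulr0 addr0 mulr1.
  by rewrite mulr1 (divff (qpoch_neq0 n.+1)) (divff (qpoch_neq0 n)).
Qed.

Lemma qzn (n : nat) : q ^ (n%:Z) = q ^+ n.
Proof. by []. Qed.

Lemma pascal1 (m k : int) : 1 <= m ->
  qbinom m k = qbinom (m - 1) (k - 1) + q ^ k * qbinom (m - 1) k.
Proof.
case: m => [[|n]|n] // _.
rewrite (_ : Posz n.+1 - 1 = Posz n); last lia.
case: k => [[|k]|k].
- rewrite qzn expr0 mul1r !qbinomE /= !subn0 qpoch0 !mul1r.
  rewrite qbinom_out; last lia. by rewrite add0r (divff (qpoch_neq0 n.+1)) (divff (qpoch_neq0 n)).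
- rewrite (_ : Posz k.+1 - 1 = Posz k); last lia. exact: pascal_nat.
- rewrite !qbinom_out; first by rewrite mulr0 addr0. all: lia.
Qed.

Lemma pascal2 (m k : int) : 1 <= m ->
  qbinom m k = q ^ (m - k) * qbinom (m - 1) (k - 1) + qbinom (m - 1) k.
Proof.
move=> hm; rewrite qbinom_sym pascal1 // addrC; congr (_ * _ + _).
- rewrite qbinom_sym; congr qbinom; ring.
- rewrite qbinom_sym; congr qbinom; ring.
Qed.

Lemma sumZ_S B (F : int -> qfrac) :
  F (B.+1)%:Z = 0 -> F (- (B.+1)%:Z) = 0 -> sumZ B.+1 F = sumZ B F.
Proof.
move=> h1 h2; rewrite /sumZ.
rewrite (_ : (2 * B.+1).+1 = ((2 * B).+1).+2)%N; last lia.
rewrite big_ord_recl big_ord_recr /=.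
rewrite (_ : (0%:Z - (B.+1)%:Z) = - (B.+1)%:Z); last lia.
rewrite h2 add0r.
rewrite (_ : (bump 0 (2 * B).+1)%:Z - (B.+1)%:Z = (B.+1)%:Z); last by rewrite /bump; lia.
rewrite h1 addr0; apply: eq_bigr => i _; congr F; rewrite /bump; lia.
Qed.

Lemma sumZ_ext B0 k (F : int -> qfrac) :
  (forall j : int, (B0 < `|j|)%N -> F j = 0) -> sumZ (B0 + k) F = sumZ B0 F.
Proof.
move=> h; elim: k => [|k IH]; first by rewrite addn0.
rewrite addnS sumZ_S ?IH //; apply: h; lia.
Qed.

Lemma sumZ_eq B1 B2 B0 (F : int -> qfrac) :
  (forall j : int, (B0 < `|j|)%N -> F j = 0) -> (B0 <= B1)%N -> (B0 <= B2)%N ->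
  sumZ B1 F = sumZ B2 F.
Proof.
move=> h h1 h2; rewrite -(subnKC h1) -(subnKC h2) !sumZ_ext //.
Qed.

Lemma sumZ_neg B (F : int -> qfrac) : sumZ B (fun j => F (- j)) = sumZ B F.
Proof.
rewrite /sumZ (reindex_inj rev_ord_inj) /=; apply: eq_bigr => i _; congr F.
have := ltn_ord i; lia.
Qed.

Lemma sumZ_shift B (F : int -> qfrac) : F B%:Z = 0 -> F (- B%:Z - 1) = 0 ->
  sumZ B (fun j => F (j - 1)) = sumZ B F.
Proof.
move=> h1 h2; rewrite /sumZ big_ord_recl big_ord_recr /=.
rewrite (_ : 0%:Z - B%:Z - 1 = - B%:Z - 1); last lia.
rewrite h2 add0r (_ : (2 * B)%:Z - B%:Z = B%:Z); last lia.
rewrite h1 addr0; apply: eq_bigr => i _; congr F; rewrite /bump; lia.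
Qed.

Lemma sumZ_add B (F G : int -> qfrac) :
  sumZ B (fun j => F j + G j) = sumZ B F + sumZ B G.
Proof. by rewrite /sumZ big_split. Qed.

Lemma sumZ_mul B c (F : int -> qfrac) :
  sumZ B (fun j => c * F j) = c * sumZ B F.
Proof. by rewrite /sumZ mulr_sumr. Qed.

Lemma sumZ_ext_fun B (F G : int -> qfrac) : (forall j, F j = G j) -> sumZ B F = sumZ B G.
Proof. by move=> h; rewrite /sumZ; apply: eq_bigr => i _; rewrite h. Qed.

Definition Fs (K i g b N M : int) (j : int) : qfrac :=
  q ^ (j * (g * K * j + K * b - g * i)) * qbinom (M + N) (M - K * j)
  - q ^ ((g * j + b) * (K * j + i)) * qbinom (M + N) (M - K * j - i).

Lemma D_Fs (K i N M a b : int) :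
  D K i N M a b = sumZ (`|M| + `|N| + `|i|).+1 (Fs K i (a + b) b N M).
Proof. by []. Qed.

Lemma R1_aux (R : comNzRingType) (a b c d x y X1 Y1 X2 Y2 m : R) :
  a * x = m * c -> b * y = m * d ->
  a * (X1 + x * Y1) - b * (X2 + y * Y2) = (a * X1 - b * X2) + m * (c * Y1 - d * Y2).
Proof. by move=> h1 h2; rewrite !mulrDr !mulrA h1 h2; ring. Qed.

Lemma R2_aux (R : comNzRingType) (a b c d x y X1 Y1 X2 Y2 m : R) :
  a * x = m * c -> b * y = m * d ->
  a * (x * X1 + Y1) - b * (y * X2 + Y2) = (a * Y1 - b * Y2) + m * (c * X1 - d * X2).
Proof. by move=> h1 h2; rewrite !mulrDr !mulrA h1 h2; ring. Qed.

Lemma qM (a b : int) : q ^ a * q ^ b = q ^ (a + b).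
Proof. by rewrite expfzDr // q_neq0. Qed.

Lemma Fs_R1 (K i g b N M j : int) : 1 <= M + N ->
  Fs K i g b N M j = Fs K i g b N (M - 1) j + q ^ M * Fs K i g (b - 1) (N - 1) M j.
Proof.
move=> hm; rewrite /Fs (@pascal1 _ (M - K * j) hm) (@pascal1 _ (M - K * j - i) hm).
rewrite (@R1_aux _ _ _ (q ^ (j * (g * K * j + K * (b - 1) - g * i)))
   (q ^ ((g * j + (b - 1)) * (K * j + i))) _ _ _ _ _ _ (q ^ M)).
- have -> : M - 1 + N = M + N - 1 by ring.
  have -> : M + (N - 1) = M + N - 1 by ring.
  have -> : M - 1 - K * j = M - K * j - 1 by ring.
  by have -> : M - K * j - 1 - i = M - K * j - i - 1 by ring.
- by rewrite !qM; congr (_ ^ _); ring.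
- by rewrite !qM; congr (_ ^ _); ring.
Qed.

Lemma Fs_R2 (K i g b N M j : int) : 1 <= M + N ->
  Fs K i g b N M j = Fs K i g b (N - 1) M j + q ^ N * Fs K i g (b + 1) N (M - 1) j.
Proof.
move=> hm; rewrite /Fs (@pascal2 _ (M - K * j) hm) (@pascal2 _ (M - K * j - i) hm).
rewrite (@R2_aux _ _ _ (q ^ (j * (g * K * j + K * (b + 1) - g * i)))
   (q ^ ((g * j + (b + 1)) * (K * j + i))) _ _ _ _ _ _ (q ^ N)).
- have -> : M - 1 + N = M + N - 1 by ring.
  have -> : M + (N - 1) = M + N - 1 by ring.
  have -> : M - 1 - K * j = M - K * j - 1 by ring.
  by have -> : M - K * j - 1 - i = M - K * j - i - 1 by ring.
- by rewrite !qM; congr (_ ^ _); ring.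
- by rewrite !qM; congr (_ ^ _); ring.
Qed.

Definition Val (K i g b N M : int) : qfrac :=
  sumZ (`|M| + `|N| + `|i|).+1 (Fs K i g b N M).

Lemma absz_b (x : int) : x <= (`|x|%N)%:Z /\ - x <= (`|x|%N)%:Z.
Proof. case: x => n /=; rewrite ?NegzE; lia. Qed.

Lemma absz_e (x : int) : (`|x|%N)%:Z = x \/ (`|x|%N)%:Z = - x.
Proof. case: x => n /=; rewrite ?NegzE; [left | right]; lia. Qed.

Lemma abs_sum_lt (M N i j : int) : (`|M| + `|N| + `|i| < `|j|)%N ->
  (`|M|%N + `|N|%N + `|i|%N)%:Z < (`|j|%N)%:Z.
Proof. move=> h; rewrite ltz_nat; exact: h. Qed.

Lemma Fs_supp (K i g b N M j : int) : 1 <= K -> 0 <= i ->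
  (`|M| + `|N| + `|i| < `|j|)%N -> Fs K i g b N M j = 0.
Proof.
move=> hK hi hj; rewrite /Fs.
have := @abs_sum_lt M N i j hj; rewrite !PoszD => hj'.
have [M1 M2] := absz_b M; have [N1 N2] := absz_b N; have [I1 I2] := absz_b i.
have J := absz_e j.
have [jp|jn] := lerP 0 j.
- have h : M - K * j < 0.
    case: J => J; rewrite J in hj'; try lia. nia.
  rewrite !qbinom_out; try (by rewrite !mulr0 subr0); try (apply/orP; left; lia).
- have h : M + N < M - K * j - i.
    case: J => J; rewrite J in hj'; try lia. nia.
  rewrite !qbinom_out; try (by rewrite !mulr0 subr0); try (apply/orP; right; lia).
Qed.

Lemma Val_eq (K i g b N M : int) B : 1 <= K -> 0 <= i -> (`|M| + `|N| + `|i| <= B)%N ->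
  sumZ B (Fs K i g b N M) = Val K i g b N M.
Proof.
move=> hK hi hB; rewrite /Val; apply: (@sumZ_eq _ _ (`|M| + `|N| + `|i|)) => //.
by move=> j hj; apply: Fs_supp.
Qed.

Lemma Val_R1 (K i g b N M : int) : 1 <= K -> 0 <= i -> 1 <= M + N ->
  Val K i g b N M = Val K i g b N (M - 1) + q ^ M * Val K i g (b - 1) (N - 1) M.
Proof.
move=> hK hi hm.
set B := (`|M| + `|N| + `|i|).+2.
have h1 : (`|M| + `|N| + `|i| <= B)%N by rewrite /B; lia.
have h2 : (`|M - 1| + `|N| + `|i| <= B)%N by rewrite /B; lia.
have h3 : (`|M| + `|N - 1| + `|i| <= B)%N by rewrite /B; lia.
rewrite -(@Val_eq K i g b N M B hK hi h1) -(@Val_eq K i g b N (M - 1) B hK hi h2).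
rewrite -(@Val_eq K i g (b - 1) (N - 1) M B hK hi h3).
rewrite -sumZ_mul -sumZ_add; apply: sumZ_ext_fun => j; exact: Fs_R1.
Qed.

Lemma Val_R2 (K i g b N M : int) : 1 <= K -> 0 <= i -> 1 <= M + N ->
  Val K i g b N M = Val K i g b (N - 1) M + q ^ N * Val K i g (b + 1) N (M - 1).
Proof.
move=> hK hi hm.
set B := (`|M| + `|N| + `|i|).+2.
have h1 : (`|M| + `|N| + `|i| <= B)%N by rewrite /B; lia.
have h2 : (`|M - 1| + `|N| + `|i| <= B)%N by rewrite /B; lia.
have h3 : (`|M| + `|N - 1| + `|i| <= B)%N by rewrite /B; lia.
rewrite -(@Val_eq K i g b N M B hK hi h1) -(@Val_eq K i g (b + 1) N (M - 1) B hK hi h2).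
rewrite -(@Val_eq K i g b (N - 1) M B hK hi h3).
rewrite -sumZ_mul -sumZ_add; apply: sumZ_ext_fun => j; exact: Fs_R2.
Qed.

Lemma qbinom0 (k : int) : qbinom 0 k = if k == 0 then 1 else 0.
Proof.
rewrite /qbinom; case: ifP => h.
- have -> : k = 0 by lia.
  by rewrite eqxx /= qpoch0 mulr1 divr1.
- case: ifP => // /eqP hk; subst k; move: h; by rewrite lexx.
Qed.

Lemma sumZ0 (F : int -> qfrac) : sumZ 0 F = F 0.
Proof. by rewrite /sumZ big_ord1 /= subr0. Qed.

Lemma sumZ_sub B (F G : int -> qfrac) :
  sumZ B (fun j => F j - G j) = sumZ B F - sumZ B G.
Proof. by rewrite /sumZ sumrB. Qed.

Lemma bin_supp (K i N M j : int) : 1 <= K -> 0 <= i ->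
  (`|M| + `|N| + `|i| < `|j|)%N ->
  qbinom (M + N) (M - K * j) = 0 /\ qbinom (M + N) (M - K * j - i) = 0.
Proof.
move=> hK hi hj.
have := @abs_sum_lt M N i j hj; rewrite !PoszD => hj'.
have [M1 M2] := absz_b M; have [N1 N2] := absz_b N; have [I1 I2] := absz_b i.
have J := absz_e j.
have [jp|jn] := lerP 0 j.
- have h : M - K * j < 0.
    case: J => J; rewrite J in hj'; try lia. nia.
  split; apply: qbinom_out; apply/orP; left; lia.
- have h : M + N < M - K * j - i.
    case: J => J; rewrite J in hj'; try lia. nia.
  split; apply: qbinom_out; apply/orP; right; lia.
Qed.

Lemma Fs_base (K i g b N M j : int) : 0 < i -> i < K -> 0 <= b -> b <= g ->
  b - i <= N - M -> N - M <= K - (g - b) - i -> N + M = 0 ->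
  Fs K i g b N M j = if (N == 0) && (j == 0) then 1 else 0.
Proof.
move=> hi hiK hb0 hbg hd1 hd2 hNM.
have hm : M + N = 0 by lia.
rewrite /Fs hm !qbinom0.
have -> : (M - K * j - i == 0) = false.
  apply/negbTE/eqP => E.
  have [jn|jp] := ltrP j 0.
  - have : K * j <= - K by nia.
    lia.
  - have : 0 <= K * j by nia.
    lia.
rewrite mulr0 subr0.
case: (boolP (M - K * j == 0)) => E.
- have ej : j = 0.
    move/eqP: E => E.
    have [jn|jp] := ltrP j 0; first by (have : K * j <= - K by nia); lia.
    have [jz|jq] := ltrP 0 j; last by lia.
    have : K <= K * j by nia.
    lia.
  subst j. have -> : N = 0 by lia.
  by rewrite eqxx /= !mulr0 mul0r -[q ^ 0%Z]/(q ^+ 0) expr0 mulr1.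
- rewrite mulr0; case: ifP => //; case/andP => /eqP h1 /eqP h2; subst j.
  move: E; have -> : M = 0 by lia.
  by rewrite mulr0 subr0 eqxx.
Qed.

Lemma Val_base (K i g b N M : int) : 0 < i -> i < K -> 0 <= b -> b <= g ->
  b - i <= N - M -> N - M <= K - (g - b) - i -> N + M = 0 ->
  Val K i g b N M = if N == 0 then 1 else 0.
Proof.
move=> hi hiK hb0 hbg hd1 hd2 hNM.
rewrite /Val (@sumZ_ext_fun _ _ (fun j : int => if (N == 0) && (j == 0) then 1 else 0)); last first.
  by move=> j; apply: Fs_base.
rewrite (@sumZ_eq _ 0 0).
- by rewrite sumZ0 eqxx andbT.
- move=> j hj; case: ifP => //; case/andP => _ /eqP h; subst j; by [].
- by [].
- by [].
Qed.

Lemma Val_ZA (K i g N M : int) : 1 <= K -> 0 <= i -> N = M - i ->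
  Val K i g 0 N M = 0.
Proof.
move=> hK hi hN; rewrite /Val /Fs sumZ_sub; apply/eqP; rewrite subr_eq0; apply/eqP.
rewrite -[in RHS]sumZ_neg; apply: sumZ_ext_fun => j.
congr (q ^ _ * _); first by ring.
rewrite qbinom_sym; congr qbinom; rewrite hN; ring.
Qed.

Lemma Val_ZB (K i g N M : int) : 1 <= K -> 0 <= i -> N = M + K - i ->
  Val K i g g N M = 0.
Proof.
move=> hK hi hN; rewrite /Val /Fs sumZ_sub; apply/eqP; rewrite subr_eq0; apply/eqP.
set B := (`|M| + `|N| + `|i|).+1.
set FB := (fun j : int => q ^ ((g * j + g) * (K * j + i)) * qbinom (M + N) (M - K * j - i)).
have hB1 : FB B%:Z = 0.
  by rewrite /FB (proj2 (@bin_supp K i N M B%:Z hK hi _)) ?mulr0 //.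
have hB2 : FB (- B%:Z - 1) = 0.
  rewrite /FB (proj2 (@bin_supp K i N M (- B%:Z - 1) hK hi _)) ?mulr0 //.
  rewrite /B; lia.
rewrite -(@sumZ_shift B FB hB1 hB2) -(sumZ_neg B (fun j => FB (j - 1))).
apply: sumZ_ext_fun => j; rewrite /FB.
congr (q ^ _ * _); first by ring.
rewrite qbinom_sym; congr qbinom; rewrite hN; ring.
Qed.

Lemma nn0 : nonneg_series 0.
Proof. by exists 0; split; [rewrite tofrac0 | move=> k; rewrite coef0]. Qed.

Lemma nn1 : nonneg_series 1.
Proof. by exists 1; split; [rewrite tofrac1 | move=> k; rewrite coef1; case: (k == 0%N)]. Qed.

Lemma nn_add a b : nonneg_series a -> nonneg_series b -> nonneg_series (a + b).
Proof.
case=> [P [-> hP]] [Q [-> hQ]]; exists (P + Q); split; first by rewrite tofracD.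
by move=> k; rewrite coefD addr_ge0.
Qed.

Lemma nn_mulq (M : int) a : 0 <= M -> nonneg_series a -> nonneg_series (q ^ M * a).
Proof.
case: M => // n _ [P [-> hP]]; exists ('X^n * P); split.
- by rewrite tofracM -qXn.
- by move=> k; rewrite coefXnM; case: ifP.
Qed.

Lemma main_ind (K i g : int) : 0 < i -> i < K -> 0 < g -> g < K ->
  forall n : nat, forall N M b : int, N + M = n%:Z -> 0 <= b -> b <= g ->
  b - i <= N - M -> N - M <= K - (g - b) - i ->
  nonneg_series (Val K i g b N M) /\ ((N < 0) || (M < 0) -> Val K i g b N M = 0).
Proof.
move=> hi hiK hg hgK; elim => [|n IH] N M b hNM hb0 hbg hd1 hd2.
  rewrite (@Val_base K i g b N M) //.
  split; first by case: ifP => _; [exact: nn1 | exact: nn0].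
  move=> h; case: ifP => [/eqP hN|_] //; exfalso; lia.
have hK : 1 <= K by lia.
have hi0 : 0 <= i by lia.
have hm : 1 <= M + N by lia.
case: (boolP ((1 <= b) && (N - M + (g - b) < K - i))) => [/andP [c1 c2]|C1].
  rewrite (@Val_R1 K i g b N M hK hi0 hm).
  have [P1 Z1] := IH N (M - 1) b ltac:(lia) hb0 hbg ltac:(lia) ltac:(lia).
  have [P2 Z2] := IH (N - 1) M (b - 1) ltac:(lia) ltac:(lia) ltac:(lia) ltac:(lia) ltac:(lia).
  split.
  - have [hM|hM] := lerP 0 M; first by apply: nn_add; [exact: P1 | apply: nn_mulq].
    rewrite Z2; last by lia.
    by rewrite mulr0 addr0.
  - move=> h; rewrite Z1; last by lia.
    by rewrite Z2 ?mulr0 ?addr0 //; lia.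
case: (boolP ((b + 1 <= g) && (b - i < N - M))) => [/andP [c1 c2]|C2].
  rewrite (@Val_R2 K i g b N M hK hi0 hm).
  have [P1 Z1] := IH (N - 1) M b ltac:(lia) hb0 hbg ltac:(lia) ltac:(lia).
  have [P2 Z2] := IH N (M - 1) (b + 1) ltac:(lia) ltac:(lia) ltac:(lia) ltac:(lia) ltac:(lia).
  split.
  - have [hN|hN] := lerP 0 N; first by apply: nn_add; [exact: P1 | apply: nn_mulq].
    rewrite Z2; last by lia.
    by rewrite mulr0 addr0.
  - move=> h; rewrite Z1; last by lia.
    by rewrite Z2 ?mulr0 ?addr0 //; lia.
have [hb|hb] := eqVneq b 0.
  have hd : N - M = - i by lia.
  subst b; rewrite (@Val_ZA K i g N M hK hi0); last by lia.
  by split; [exact: nn0 | ].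
have hb' : b = g by lia.
have hd : N - M = K - i by lia.
subst b; rewrite (@Val_ZB K i g N M hK hi0); last by lia.
by split; [exact: nn0 | ].
Qed.

Lemma floor2_b (x : int) : 2 * floor2 x <= x <= 2 * floor2 x + 1.
Proof.
rewrite /floor2; have := divz_eq x 2; have := @modz_ge0 x 2 isT; have := @ltz_pmod x 2 isT.
move=> h1 h2 h3; apply/andP; split; lia.
Qed.

Lemma ceil2_b (x : int) : 2 * ceil2 x - 1 <= x <= 2 * ceil2 x.
Proof.
rewrite /ceil2; have /andP[h1 h2] := floor2_b (- x); rewrite /floor2 in h1 h2.
apply/andP; split; lia.
Qed.

Theorem theorem2p2 (L p' p r s : nat) :
  (0 < p)%N -> (p < p')%N ->
  (0 < r)%N -> (r < p)%N -> (0 < s)%N -> (s < p')%N ->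
  let Lz := L%:Z in let pz := p%:Z in let p'z := p'%:Z in
  let rz := r%:Z in let sz := s%:Z in
  D p'z sz (ceil2 (Lz + rz - sz)) (floor2 (Lz - rz + sz)) (pz - rz) rz
  = sumZ (L + s).+1 (fun j =>
      q ^ (j ^+ 2 * pz * p'z + (rz * p'z - sz * pz) * j)
        * qbinom Lz (floor2 (Lz - rz + sz) - j * p'z)
      - q ^ ((j * pz + rz) * (j * p'z + sz))
        * qbinom Lz (floor2 (Lz - rz - sz) - j * p'z))
  /\ nonneg_series (D p'z sz (ceil2 (Lz + rz - sz)) (floor2 (Lz - rz + sz)) (pz - rz) rz).
Proof.
move=> h1 h2 h3 h4 h5 h6 Lz pz p'z rz sz.
rewrite D_Fs.
have /andP[f1 f2] := floor2_b (Lz - rz + sz).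
have /andP[f3 f4] := floor2_b (Lz - rz - sz).
have /andP[c1 c2] := ceil2_b (Lz + rz - sz).
set N := ceil2 (Lz + rz - sz) in c1 c2 *.
set M := floor2 (Lz - rz + sz) in f1 f2 *.
set M' := floor2 (Lz - rz - sz) in f3 f4 *.
have hNM : N + M = L%:Z by rewrite /Lz /rz /sz in c1 c2 f1 f2 *; lia.
have hM' : M' = M - sz by rewrite /Lz /rz /sz in f1 f2 f3 f4 *; lia.
split.
- rewrite (@sumZ_eq _ (L + s).+1 (L + s)).
  + apply: sumZ_ext_fun => j; rewrite /Fs.
    have -> : M + N = Lz by rewrite /Lz; lia.
    have -> : M - p'z * j - sz = M' - j * p'z by rewrite hM'; ring.
    have -> : M - p'z * j = M - j * p'z by ring.
    congr (q ^ _ * _ - q ^ _ * _); ring.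
  + move=> j hj.
    have hK : 1 <= p'z by rewrite /p'z; lia.
    have hrK : rz + 1 <= p'z by rewrite /p'z /rz; lia.
    have [J1 J2] := absz_b j; have J := absz_e j.
    have hj' : (L + s)%:Z < (`|j|%N)%:Z by rewrite ltz_nat.
    rewrite /Fs.
    have [jp|jn] := lerP 0 j.
    * have h : M - p'z * j < 0.
        case: J => J; rewrite J in hj'; rewrite /Lz /rz /sz in f1 f2; try lia. nia.
      rewrite !qbinom_out; try (by rewrite !mulr0 subr0); try (apply/orP; left; rewrite /sz; lia).
    * have h : M + N < M - p'z * j - sz.
        case: J => J; rewrite J in hj'; rewrite /Lz /rz /sz in f1 f2 hNM *; try lia.
        have : (p'z - 1) * (- j - 1) >= 0 by apply: mulr_ge0; lia.
        nia.
      rewrite !qbinom_out; try (by rewrite !mulr0 subr0); try (apply/orP; right; rewrite /sz; lia).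
  + rewrite /sz; lia.
  + lia.
- have := @main_ind p'z sz (pz - rz + rz) _ _ _ _ L N M rz hNM.
  rewrite /p'z /sz /pz /rz /Lz in c1 c2 f1 f2 hNM *.
  case; try lia.
  move=> P _; rewrite /Val in P; exact: P.
Qed.
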